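(* Let $\mathcal{X},\mathcal{Y},\mathcal{Z}$ be sets, $\mathcal{G}=\{g_1,\dots,g_K\}$ a finite set of maps $\mathcal{X}\to\mathcal{Z}$, and $\mathcal{H}$ a set of maps $\mathcal{Z}\to\mathbb{R}$. Fix arbitrary datasets $\mathcal{S}_t=((x_{t,1},y_{t,1}),\dots,(x_{t,m},y_{t,m}))$, $t=1,\dots,T$, all of size $m$. Assume that for every $t$ and every $g\in\mathcal{G}$, $\hat L_t(g)\in[0,C]$ and $\mathcal{R}_t(g)\le\beta(g,m)$. Run EWA-LL with $\pi_1$ uniform on $\mathcal{G}$ and $\eta=\frac{2}{C}\sqrt{\frac{2\log K}{T}}$. Then $$\frac{1}{T}\sum_{t=1}^T\mathbb{E}_{\hat g_t\sim\pi_t}\Big[\frac{1}{m}\sum_{i=1}^m\hat\ell_{t,i}\Big]\le\min_{1\le k\le K}\Bigg\{\frac{1}{T}\sum_{t=1}^T\inf_{h_t\in\mathcal{H}}\frac{1}{m}\sum_{i=1}^m\ell\big(h_t\circ g_k(x_{t,i}),y_{t,i}\big)+\beta(g_k,m)\Bigg\}+C\sqrt{\frac{\log K}{2T}}.$$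
   Context: Within-task algorithm: for each task $t$ and each $g\in\mathcal{G}$, an online algorithm processes $\mathcal{S}_t$ sequentially, producing at step $i$ a prediction $\hat y^g_{t,i}$ depending only on $g$, $x_{t,1},\dots,x_{t,i}$, $y_{t,1},\dots,y_{t,i-1}$. Let $\hat L_t(g)=\frac{1}{m}\sum_{i=1}^m\ell(\hat y^g_{t,i},y_{t,i})$ and $\mathcal{R}_t(g)=\hat L_t(g)-\inf_{h\in\mathcal{H}}\frac1m\sum_{i=1}^m\ell(h\circ g(x_{t,i}),y_{t,i})$. EWA-LL: given a prior $\pi_1$ on $\mathcal{G}$ and $\eta>0$, for $t=1,\dots,T$: draw $\hat g_t\sim\pi_t$; run the within-task algorithm on $\mathcal{S}_t$ with $\hat g_t$, incurring losses $\hat\ell_{t,i}=\ell(\hat y^{\hat g_t}_{t,i},y_{t,i})$; update $\pi_{t+1}(g_k)=\exp(-\eta\hat L_t(g_k))\pi_t(g_k)/\sum_{j=1}^K\exp(-\eta\hat L_t(g_j))\pi_t(g_j)$. $\mathbb{E}_{\hat g_t\sim\pi_t}$ is over the random draw of $\hat g_t$. *)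

(* Defs.v *)
From mathcomp Require Import all_boot all_order all_algebra.
From mathcomp Require Import all_classical all_reals all_analysis.
Set Implicit Arguments. Unset Strict Implicit. Unset Printing Implicit Defensive.
Import Order.TTheory GRing.Theory Num.Theory.
Local Open Scope classical_set_scope.
Local Open Scope ring_scope.

(* Tasks are indexed t = 0, ..., T-1 and examples i = 0, ..., m-1;
   x t i, y t i is the i-th example (x_{t,i+1}, y_{t,i+1}) of dataset S_{t+1}.
   The within-task online algorithm [alg] receives the representation g,
   the past examples of the current task and the current input, and outputs
   a real prediction: hence yhat^g_{t,i} depends only on g, x_{t,1..i},
   y_{t,1..i-1}. *)

Definition within_pred {R : realType} {X Y Z : Type}
  (alg : (X -> Z) -> seq (X * Y) -> X -> R)
  (x : nat -> nat -> X) (y : nat -> nat -> Y) (g : X -> Z) (t i : nat) : R :=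
  alg g [seq (x t j, y t j) | j <- iota 0 i] (x t i).

Definition Lhat {R : realType} {X Y Z : Type}
  (alg : (X -> Z) -> seq (X * Y) -> X -> R) (loss : R -> Y -> R)
  (x : nat -> nat -> X) (y : nat -> nat -> Y) (m : nat) (g : X -> Z) (t : nat) : R :=
  m%:R^-1 * \sum_(i < m) loss (within_pred alg x y g t i) (y t i).

Definition best_loss {R : realType} {X Y Z : Type}
  (H : set (Z -> R)) (loss : R -> Y -> R)
  (x : nat -> nat -> X) (y : nat -> nat -> Y) (m : nat) (g : X -> Z) (t : nat)
  : \bar R :=
  ereal_inf [set (m%:R^-1 * \sum_(i < m) loss (h (g (x t i))) (y t i))%:E
            | h in H].

Definition within_regret {R : realType} {X Y Z : Type}
  (alg : (X -> Z) -> seq (X * Y) -> X -> R) (H : set (Z -> R))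
  (loss : R -> Y -> R) (x : nat -> nat -> X) (y : nat -> nat -> Y)
  (m : nat) (g : X -> Z) (t : nat) : \bar R :=
  ((Lhat alg loss x y m g t)%:E - best_loss H loss x y m g t)%E.

(* EWA-LL weights: ewa_pi L t = pi_{t+1}; pi_1 uniform on 'I_K,
   pi_{t+1}(k) = exp(-eta L_t(k)) pi_t(k) / sum_j exp(-eta L_t(j)) pi_t(j),
   where L t k = \hat L_t(g_k). *)
Fixpoint ewa_pi {R : realType} (K : nat) (eta : R) (L : nat -> 'I_K -> R)
  (t : nat) : 'I_K -> R :=
  match t with
  | 0 => fun _ => K%:R^-1
  | t'.+1 =>
      let p := ewa_pi eta L t' in
      fun k => expR (- eta * L t' k) * p k /
               \sum_(j < K) expR (- eta * L t' j) * p j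
  end.

(* E_{ghat_t ~ pi_t} [ (1/m) sum_i hat ell_{t,i} ]  (pi_t is deterministic) *)
Definition ewa_expected_loss {R : realType} {X Y Z : Type} (K : nat)
  (g : 'I_K -> X -> Z) (alg : (X -> Z) -> seq (X * Y) -> X -> R)
  (loss : R -> Y -> R) (x : nat -> nat -> X) (y : nat -> nat -> Y)
  (m : nat) (eta : R) (t : nat) : R :=
  let L := fun s k => Lhat alg loss x y m (g k) s in
  \sum_(k < K) ewa_pi eta L t k * L t k.

(* Main.v *)
Require Import Defs.
From mathcomp Require Import all_boot all_order all_algebra.
From mathcomp Require Import all_classical all_reals all_analysis.
From mathcomp Require Import ring lra zify.
Import Order.TTheory GRing.Theory Num.Theory.
Local Open Scope classical_set_scope.
Local Open Scope ring_scope.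

Section K.
Variable R : realType.
Implicit Types q s : R.

Lemma der_e (s : R) : is_derive s 1 (fun x : R => expR (- x)) (- expR (- s)).
Proof.
have := @is_derive1_comp R expR (fun x => - x) s (expR (- s)) (-1) _ _.
rewrite mulrN1; apply.
Qed.

Definition uu q s := 1 - q + q * expR (- s).

Lemma uu_gt0 q s : 0 <= q <= 1 -> 0 < uu q s.
Proof.
move=> /andP[q0 q1]; rewrite /uu.
have [->|qn0] := eqVneq q 0; first by rewrite subr0 mul0r addr0.
have : 0 < q * expR (- s) by rewrite mulr_gt0 ?expR_gt0 // lt_def qn0.
lra.
Qed.

Lemma der_u q s : is_derive s 1 (uu q) (- (q * expR (- s))).
Proof.
have -> : uu q = cst (1 - q) + q *: (fun x => expR (- x)).
  by apply/funext => x; rewrite /uu /= .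
apply: is_derive_eq.
by rewrite add0r mulrN1 scalerN.
Qed.

Definition ff q s := ln (uu q s) + s * q - s ^+ 2 / 8.
Definition FF q s := (uu q s)^-1 * (- (q * expR (- s))) + q - s / 4.

Lemma der_f q s : 0 <= q <= 1 -> is_derive s 1 (ff q) (FF q s).
Proof.
move=> hq.
have -> : ff q = ((@ln R) \o uu q) + (fun x => x * q) - (fun x => 8^-1 * x ^+ 2).
  apply/funext => x; rewrite /ff !fctE /= [8^-1 * _]mulrC. done.
have Hu := der_u q s.
have hu := @uu_gt0 q s hq.
have Dl : is_derive s 1 ((@ln R) \o uu q) ((uu q s)^-1 * - (q * expR (- s))).
  exact: (is_derive1_comp (is_derive1_ln hu) Hu).
apply: is_derive_eq.
have E : forall a b : R, a *: b = a * b by [].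
rewrite /FF !E; by field; rewrite (gt_eqF hu).
Qed.

Definition GG q s := q * (1 - q) * expR (- s) / (uu q s) ^+ 2 - 4^-1.

Lemma der_F q s : 0 <= q <= 1 -> is_derive s 1 (FF q) (GG q s).
Proof.
move=> hq.
have hu := @uu_gt0 q s hq.
have -> : FF q = ((fun x => (uu q x)^-1) * (fun x => - (q * expR (- x)))) + cst q - (fun x => 4^-1 * x).
  by apply/funext => x; rewrite /FF !fctE /= [4^-1 * _]mulrC.
have Dv := is_deriveV (lt0r_neq0 hu) (der_u q s).
apply: is_derive_eq.
have E : forall a b : R, a *: b = a * b by [].
by rewrite /GG /uu !E; field; exact: lt0r_neq0 hu.
Qed.

Lemma GG_le0 q s : 0 <= q <= 1 -> GG q s <= 0.
Proof.
move=> hq; have hu := @uu_gt0 q s hq.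
rewrite /GG subr_le0 ler_pdivrMr ?exprn_gt0 //.
move: hu hq; rewrite /uu.
have := expR_gt0 (- s).
set e := expR (- s) => e0 hu /andP[q0 q1].
have := sqr_ge0 (1 - q - q * e).
nra.
Qed.

Lemma FF_le0 q s : 0 <= q <= 1 -> 0 <= s -> FF q s <= 0.
Proof.
move=> hq s0.
have -> : 0 = FF q 0 by rewrite /FF /uu oppr0 expR0 mulr1 subrK invr1; lra.
apply: (@ler0_derive1_nincry R (FF q) 0) => //.
- by move=> x _; case: (der_F q x hq).
- by move=> x _; have D := der_F q x hq; rewrite derive1E derive_val GG_le0.
- apply: derivable_within_continuous => x _; by case: (der_F q x hq).
Qed.

Lemma ff_le0 q s : 0 <= q <= 1 -> 0 <= s -> ff q s <= 0.
Proof.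
move=> hq s0.
have -> : 0 = ff q 0 by rewrite /ff /uu oppr0 expR0 mulr1 subrK ln1; lra.
apply: (@ler0_derive1_nincry R (ff q) 0) => //.
- by move=> x _; case: (der_f q x hq).
- move=> x; rewrite in_itv /= andbT => x0.
  by have D := der_f q x hq; rewrite derive1E derive_val FF_le0 // ltW.
- apply: derivable_within_continuous => x _; by case: (der_f q x hq).
Qed.

Lemma chord (C lam x : R) : 0 < C -> 0 <= x <= C ->
  expR (- (lam * x)) <= x / C * expR (- (lam * C)) + (1 - x / C).
Proof.
move=> C0 /andP[x0 xC].
have h0 : 0 <= x / C by rewrite divr_ge0 // ltW.
have h1 : x / C <= 1 by rewrite ler_pdivrMr // mul1r.
have := convex_expR (Itv01 h0 h1) (- (lam * C)) 0.
rewrite !convRE /= expR0 mulr0 addr0 mulr1.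
suff -> : x / C * - (lam * C) = - (lam * x) by [].
by field; rewrite gt_eqF.
Qed.

Lemma hoeff (n : nat) (p L : 'I_n -> R) (C lam : R) :
  0 < C -> 0 <= lam -> (forall k, 0 <= p k) -> \sum_k p k = 1 ->
  (forall k, 0 <= L k <= C) ->
  ln (\sum_k p k * expR (- (lam * L k))) <=
  - lam * (\sum_k p k * L k) + lam ^+ 2 * C ^+ 2 / 8.
Proof.
move=> C0 l0 p0 p1 LC.
set m := \sum_k p k * L k.
have m0 : 0 <= m by apply: sumr_ge0 => k _; rewrite mulr_ge0 //; case/andP: (LC k).
have mC : m <= C.
  rewrite -[C]mul1r -p1 mulr_suml; apply: ler_sum => k _.
  by rewrite ler_wpM2l //; case/andP: (LC k).
set q := m / C.
have hq : 0 <= q <= 1.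
  by apply/andP; split; [rewrite divr_ge0 // ltW | rewrite /q ler_pdivrMr // mul1r].
have S : \sum_k p k * expR (- (lam * L k)) <= uu q (lam * C).
  apply: (le_trans (y := \sum_k p k * (L k / C * expR (- (lam * C)) + (1 - L k / C)))).
    by apply: ler_sum => k _; rewrite ler_wpM2l // chord.
  rewrite /uu /q /m.
  under eq_bigr => k _ do rewrite mulrDr mulrBr mulr1 mulrA mulrA.
  rewrite big_split sumrB /= p1 -!mulr_suml.
  lra.
have Spos : 0 < \sum_k p k * expR (- (lam * L k)).
  apply: (lt_le_trans (expR_gt0 (- (lam * C)))).
  rewrite -[X in X <= _]mul1r -p1 mulr_suml; apply: ler_sum => k _.
  rewrite ler_wpM2l // ler_expR lerN2 ler_wpM2l //.
  by case/andP: (LC k).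
apply: (le_trans (y := ln (uu q (lam * C)))).
  by rewrite ler_ln // posrE // uu_gt0.
have := @ff_le0 q (lam * C) hq (mulr_ge0 l0 (ltW C0)).
rewrite /ff /q.
have -> : lam * C * (m / C) = lam * m by field; rewrite gt_eqF.
move=> H; rewrite mulNr; lra.
Qed.

End K.

Section EWA.
Variable R : realType.

Lemma sum_pos (n : nat) (F : 'I_n -> R) : (0 < n)%N -> (forall k, 0 < F k) ->
  0 < \sum_k F k.
Proof.
case: n F => // n F _ Fp; rewrite big_ord_recl.
have : 0 <= \sum_(i < n) F (lift ord0 i) by apply: sumr_ge0 => i _; exact: ltW.
have := Fp ord0; lra.
Qed.

Variables (K : nat) (eta : R) (L : nat -> 'I_K -> R).
Hypothesis K0 : (0 < K)%N.

Definition Zs t := \sum_(j < K) expR (- eta * L t j) * ewa_pi eta L t j.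

Lemma pi_pos t k : 0 < ewa_pi eta L t k.
Proof.
elim: t k => [|t IH] k /=; first by rewrite invr_gt0 ltr0n.
rewrite divr_gt0 ?mulr_gt0 ?expR_gt0 //.
by apply: sum_pos => // j; rewrite mulr_gt0 ?expR_gt0.
Qed.

Lemma Zs_pos t : 0 < Zs t.
Proof. by apply: sum_pos => // j; rewrite mulr_gt0 ?expR_gt0 ?pi_pos. Qed.

Lemma pi_sum t : \sum_k ewa_pi eta L t k = 1.
Proof.
case: t => [|t] /=.
  by rewrite sumr_const card_ord -[_ *+ _]mulr_natr mulVf // pnatr_eq0 -lt0n.
by rewrite -mulr_suml mulfV // (gt_eqF (Zs_pos t)).
Qed.

Lemma pi_le1 t k : ewa_pi eta L t k <= 1.
Proof.
rewrite -(pi_sum t) (bigD1 k) //= lerDl.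
by apply: sumr_ge0 => j _; apply: ltW; apply: pi_pos.
Qed.

Lemma ln_pi n k : ln (ewa_pi eta L n k) =
  - ln K%:R - eta * \sum_(t < n) L t k - \sum_(t < n) ln (Zs t).
Proof.
elim: n => [|n IH].
  by rewrite /= !big_ord0 lnV ?posrE ?ltr0n // mulr0 !subr0.
rewrite !big_ord_recr /=.
rewrite ln_div ?posrE ?mulr_gt0 ?expR_gt0 ?pi_pos //; last first.
  exact: (Zs_pos n).
rewrite lnM ?posrE ?expR_gt0 ?pi_pos // expRK IH -/(Zs n).
ring.
Qed.

Lemma ewa_bound (C : R) (T : nat) (k : 'I_K) : 0 < C -> 0 <= eta ->
  (forall t j, (t < T)%N -> 0 <= L t j <= C) ->
  eta * \sum_(t < T) \sum_j ewa_pi eta L t j * L t j <=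
  ln K%:R + eta * \sum_(t < T) L t k + T%:R * (eta ^+ 2 * C ^+ 2 / 8).
Proof.
move=> C0 e0 LC.
have h1 := ln_le0 (pi_le1 T k).
rewrite ln_pi in h1.
have h2 : \sum_(t < T) ln (Zs t) <=
    \sum_(t < T) (- eta * (\sum_j ewa_pi eta L t j * L t j) + eta ^+ 2 * C ^+ 2 / 8).
  apply: ler_sum => t _.
  have := @hoeff R K (ewa_pi eta L t) (L t) C eta C0 e0 (fun j => ltW (pi_pos t j)) (pi_sum t) (fun j => LC t j (ltn_ord t)).
  congr (_ <= _); congr ln; rewrite /Zs; apply: eq_bigr => j _.
  by rewrite mulrC mulNr.
rewrite big_split /= -mulr_sumr sumr_const card_ord -mulr_natl in h2.
lra.
Qed.
End EWA.

Lemma main_real (R : realType) (K : nat) (L : nat -> 'I_K -> R) (C : R) (T : nat) (k : 'I_K) :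
  (0 < K)%N -> (0 < T)%N -> 0 < C -> (forall t j, (t < T)%N -> 0 <= L t j <= C) ->
  \sum_(t < T) \sum_j ewa_pi (2 / C * Num.sqrt (2 * ln K%:R / T%:R)) L t j * L t j <=
  \sum_(t < T) L t k + T%:R * (C * Num.sqrt (ln K%:R / (2 * T%:R))).
Proof.
move=> K0 T0 C0 LC; set eta := 2 / C * Num.sqrt _.
have T0' : (0 : R) < T%:R by rewrite ltr0n.
have [K1|K1] : K = 1%N \/ (1 < K)%N by case: K K0 {L LC k eta} => [|[|n]]// _; [left|right].
-
  have -> : ln (K%:R : R) = 0 by rewrite K1 ln1.
  rewrite mul0r sqrtr0 !mulr0 addr0; apply: ler_sum => t _.
  have jk : forall j : 'I_K, j = k.
    move=> j; apply: val_inj => /=; have := ltn_ord j; have := ltn_ord k; lia.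
  rewrite (eq_bigr (fun j => ewa_pi eta L t j * L t k)); last by move=> j _; rewrite (jk j).
  by rewrite -mulr_suml pi_sum // mul1r.
-
  have lK : 0 < ln (K%:R : R) by apply: ln_gt0; rewrite ltr1n.
  set r := Num.sqrt (2 * ln (K%:R : R) / T%:R).
  have r0 : 0 < r by rewrite sqrtr_gt0 divr_gt0 // mulr_gt0.
  have r2 : r ^+ 2 = 2 * ln (K%:R : R) / T%:R by rewrite sqr_sqrtr // ltW // divr_gt0 // mulr_gt0.
  have lKE : ln (K%:R : R) = r ^+ 2 * T%:R / 2.
    by rewrite r2; field; rewrite gt_eqF.
  have sE : Num.sqrt (ln (K%:R : R) / (2 * T%:R)) = r / 2.
    have -> : ln (K%:R : R) / (2 * T%:R) = (r / 2) ^+ 2.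
      by rewrite lKE; field; rewrite gt_eqF.
    by rewrite sqrtr_sqr ger0_norm // divr_ge0 // ltW.
  have e0 : 0 < eta by rewrite /eta mulr_gt0 // divr_gt0.
  have hE := @ewa_bound R K eta L K0 C T k C0 (ltW e0) LC.
  rewrite sE -(ler_pM2l e0); apply: (le_trans hE).
  rewrite le_eqVlt; apply/orP; left; apply/eqP.
  rewrite lKE /eta -/r; by field; rewrite (gt_eqF C0).
Qed.

Theorem theorem2 (R : realType) (X Y Z : Type) (K : nat) (g : 'I_K -> X -> Z)
  (H : set (Z -> R)) (loss : R -> Y -> R)
  (alg : (X -> Z) -> seq (X * Y) -> X -> R)
  (T m : nat) (x : nat -> nat -> X) (y : nat -> nat -> Y)
  (C : R) (beta : (X -> Z) -> nat -> R) :
  (0 < K)%N -> (0 < T)%N -> 0 < C ->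
  (forall t k, (t < T)%N ->
     0 <= Lhat alg loss x y m (g k) t <= C) ->
  (forall t k, (t < T)%N ->
     (within_regret alg H loss x y m (g k) t <= (beta (g k) m)%:E)%E) ->
  let eta := 2 / C * Num.sqrt (2 * ln K%:R / T%:R) in
  ((T%:R^-1 * \sum_(t < T) ewa_expected_loss g alg loss x y m eta t)%:E
   <= \big[Order.min/+oo%E]_(k < K)
        ((T%:R^-1)%:E * (\sum_(t < T) best_loss H loss x y m (g k) t)
         + (beta (g k) m)%:E)
      + (C * Num.sqrt (ln K%:R / (2 * T%:R)))%:E)%E.
Proof.
move=> K0 T0 C0 HL Hreg.
cbv zeta.
set Lf := fun s k => Lhat alg loss x y m (g k) s.
have [k _ ->] := eq_bigmin (x := +oo%E) (Ordinal K0) xpredT (fun k : 'I_K => ((T%:R^-1)%:E * (\sum_(t < T) best_loss H loss x y m (g k) t) + (beta (g k) m)%:E)%E) isT (fun i _ => leey _).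
set eta := 2 / C * Num.sqrt _.
have M := @main_real R K Lf C T k K0 T0 C0 (fun t j ht => HL t j ht).
have T0' : (0 : R) < T%:R by rewrite ltr0n.
set D := C * Num.sqrt _.
have nNy : forall t : 'I_T, best_loss H loss x y m (g k) t != -oo%E.
  move=> t; apply/eqP => E; have := Hreg t k (ltn_ord t).
  by rewrite /within_regret E.
case: (pselect (forall t : 'I_T, best_loss H loss x y m (g k) t \is a fin_num)) => [fin|nfin].
- have Hb : forall t : 'I_T, Lf t k <= fine (best_loss H loss x y m (g k) t) + beta (g k) m.
    move=> t; have := Hreg t k (ltn_ord t).
    rewrite /within_regret -(fineK (fin t)) -EFinB lee_fin /Lf /=; lra.
  rewrite (eq_bigr (fun t : 'I_T => (fine (best_loss H loss x y m (g k) t))%:E)); last first.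
    by move=> t _; rewrite fineK.
  rewrite sumEFin -EFinM -!EFinD lee_fin.
  set Cb := \sum_(t < T) fine _.
  have S : \sum_(t < T) Lf t k <= Cb + T%:R * beta (g k) m.
    apply: (le_trans (ler_sum _ (fun t _ => Hb t))).
    rewrite big_split /=.
    have -> : \sum_(i < T) beta (g k) m = T%:R * beta (g k) m.
      by rewrite sumr_const card_ord mulr_natl.
    exact: lexx.
  have M' : \sum_(t < T) ewa_expected_loss g alg loss x y m eta t <= \sum_(t < T) Lf t k + T%:R * D := M.
  apply: (le_trans (y := T%:R^-1 * (Cb + T%:R * beta (g k) m + T%:R * D))).
    apply: ler_wpM2l; first by rewrite invr_ge0 ltW.
    lra.
  by rewrite le_eqVlt; apply/orP; left; apply/eqP; field; rewrite gt_eqF.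
- have [t ht] : exists t : 'I_T, ~ (best_loss H loss x y m (g k) t \is a fin_num).
    by apply/existsNP.
  move/negP/fin_numPn: ht => [E|E]; first by move: (nNy t); rewrite E.
  have Sy : (\sum_(t < T) best_loss H loss x y m (g k) t = +oo)%E.
    apply/esum_eqyP => [i _|]; first exact: nNy.
    by exists t; split => //; rewrite mem_index_enum.
  rewrite Sy gt0_muley; last by rewrite lte_fin invr_gt0.
  have -> : (+oo + (beta (g k) m)%:E + D%:E = +oo :> \bar R)%E by [].
  exact: leey.
Qed.
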